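(* Let $\xi$ and $\chi$ be $\mu$-calculus formulas such that $\xi$ is free for $x$ in $\chi$, $x\in\mathrm{FV}(\chi)$, $|\xi|>1$, and $\chi[\xi/x]$ is tidy. Then there are a tidy formula $\chi'$ and a variable $x'$ such that $\xi$ is free for $x'$ in $\chi'$, $\chi'[\xi/x']=\chi[\xi/x]$, $|\chi'|\le|\chi|$, $\mathit{ad}_\eta(\chi')\le\mathit{ad}_\eta(\chi)$ for both $\eta\in\{\mu,\nu\}$, and $\xi\not\trianglelefteq_f\chi'$.
   Context: Syntax. Formulas of the modal $\mu$-calculus are taken in negation normal form: $\phi ::= \top \mid \bot \mid p \mid \neg p \mid x \mid \phi\land\phi\mid\phi\lor\phi\mid\Diamond\phi\mid\Box\phi\mid\mu x.\phi\mid\nu x.\phi$, where $p$ ranges over proposition letters and $x$ over an infinite supply of variables (which occur only positively). The formulas $\top,\bot,p,\neg p,x$ are atomic. $\mathrm{FV}(\phi)$ and $\mathrm{BV}(\phi)$ are the sets of free and bound variables of $\phi$; $\phi$ is tidy if $\mathrm{FV}(\phi)\cap\mathrm{BV}(\phi)=\varnothing$. $\bar\eta$ denotes the fixpoint operator other than $\eta\in\{\mu,\nu\}$. $\chi[\xi/x]$ is the result of replacing every free occurrence of $x$ in $\chi$ by $\xi$; $\xi$ is free for $x$ in $\chi$ if no free variable of $\xi$ becomes bound in $\chi[\xi/x]$. $|\phi|$ is the length of $\phi$ (number of nodes of its syntax tree). Free subformulas. $\phi\trianglelefteq_f\psi$ iff $\psi=\chi[\phi/y]$ for some formula $\chi$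 and variable $y$ with $y\in\mathrm{FV}(\chi)$ and $\phi$ free for $y$ in $\chi$. Alternation hierarchy. The classes $\mathrm{AH}_\eta(n)$ ($\eta\in\{\mu,\nu\}$, $n\in\omega$) are the least classes such that: (1) all atomic formulas belong to $\mathrm{AH}_\eta(0)$; (2) each $\mathrm{AH}_\eta(n)$ is closed under $\land,\lor,\Diamond,\Box$; (3) if $\chi\in\mathrm{AH}_\eta(n)$ then $\bar\eta x.\chi\in\mathrm{AH}_\eta(n)$; (4) if $\chi,\xi\in\mathrm{AH}_\eta(n)$ and $\xi$ is free for $x$ in $\chi$ then $\chi[\xi/x]\in\mathrm{AH}_\eta(n)$; (5) $\mathrm{AH}_\mu(n)\cup\mathrm{AH}_\nu(n)\subseteq\mathrm{AH}_\eta(n+1)$. $\mathit{ad}_\eta(\xi)$ is the least $k$ with $\xi\in\mathrm{AH}_\eta(k)$. *)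

(* Defs.v *)
From Stdlib Require Import Arith Lia Classical ClassicalEpsilon.

(* Proposition letters and variables are both drawn from nat
   (an infinite supply); they live in separate syntactic categories. *)
Inductive form : Type :=
| FTop : form
| FBot : form
| FProp : nat -> form
| FNProp : nat -> form
| FVar : nat -> form
| FAnd : form -> form -> form
| FOr : form -> form -> form
| FDia : form -> form
| FBox : form -> form
| FMu : nat -> form -> form
| FNu : nat -> form -> form.

Inductive fp : Type := Mu | Nu.
Definition fp_dual (e : fp) : fp := match e with Mu => Nu | Nu => Mu end.
Definition FFix (e : fp) (x : nat) (f : form) : form :=
  match e with Mu => FMu x f | Nu => FNu x f end.

Definition atomic (f : form) : Prop :=
  match f with FTop | FBot | FProp _ | FNProp _ | FVar _ => True | _ => False end.

Fixpoint free_in (x : nat) (f : form) : Prop :=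
  match f with
  | FVar y => x = y
  | FTop | FBot | FProp _ | FNProp _ => False
  | FAnd a b | FOr a b => free_in x a \/ free_in x b
  | FDia a | FBox a => free_in x a
  | FMu y a | FNu y a => x <> y /\ free_in x a
  end.

Fixpoint bound_in (x : nat) (f : form) : Prop :=
  match f with
  | FTop | FBot | FProp _ | FNProp _ | FVar _ => False
  | FAnd a b | FOr a b => bound_in x a \/ bound_in x b
  | FDia a | FBox a => bound_in x a
  | FMu y a | FNu y a => x = y \/ bound_in x a
  end.

Definition tidy (f : form) : Prop := forall x, ~ (free_in x f /\ bound_in x f).

(* subst chi xi x = chi[xi/x]: replace every free occurrence of x in chi by xi *)
Fixpoint subst (chi xi : form) (x : nat) : form :=
  match chi with
  | FVar y => if Nat.eqb x y then xi else FVar y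
  | FTop | FBot | FProp _ | FNProp _ => chi
  | FAnd a b => FAnd (subst a xi x) (subst b xi x)
  | FOr a b => FOr (subst a xi x) (subst b xi x)
  | FDia a => FDia (subst a xi x)
  | FBox a => FBox (subst a xi x)
  | FMu y a => if Nat.eqb x y then chi else FMu y (subst a xi x)
  | FNu y a => if Nat.eqb x y then chi else FNu y (subst a xi x)
  end.

(* free_for xi x chi : xi is free for x in chi, i.e. no free variable of xi
   becomes bound in chi[xi/x] (no free occurrence of x in chi lies in the
   scope of a binder of a free variable of xi). *)
Fixpoint free_for (xi : form) (x : nat) (chi : form) : Prop :=
  match chi with
  | FTop | FBot | FProp _ | FNProp _ | FVar _ => True
  | FAnd a b | FOr a b => free_for xi x a /\ free_for xi x b
  | FDia a | FBox a => free_for xi x a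
  | FMu y a | FNu y a =>
      x = y \/ ((free_in x a -> ~ free_in y xi) /\ free_for xi x a)
  end.

Fixpoint size (f : form) : nat :=
  match f with
  | FTop | FBot | FProp _ | FNProp _ | FVar _ => 1
  | FAnd a b | FOr a b => S (size a + size b)
  | FDia a | FBox a | FMu _ a | FNu _ a => S (size a)
  end.

Definition free_subformula (phi psi : form) : Prop :=
  exists (chi : form) (y : nat),
    psi = subst chi phi y /\ free_in y chi /\ free_for phi y chi.

Inductive AH : fp -> nat -> form -> Prop :=
| AH_atom : forall e f, atomic f -> AH e 0 f
| AH_and : forall e n a b, AH e n a -> AH e n b -> AH e n (FAnd a b)
| AH_or : forall e n a b, AH e n a -> AH e n b -> AH e n (FOr a b)
| AH_dia : forall e n a, AH e n a -> AH e n (FDia a)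
| AH_box : forall e n a, AH e n a -> AH e n (FBox a)
| AH_fix : forall e n x chi, AH e n chi -> AH e n (FFix (fp_dual e) x chi)
| AH_subst : forall e n x chi xi,
    AH e n chi -> AH e n xi -> free_for xi x chi -> AH e n (subst chi xi x)
| AH_up : forall e e' n f, AH e' n f -> AH e (S n) f.

Definition is_ad (e : fp) (f : form) (k : nat) : Prop :=
  AH e k f /\ (forall j, AH e j f -> k <= j).

(* ad_e(f): the least k with f in AH_e(k) (chosen by Hilbert epsilon;
   ad_spec below shows it is indeed the least level). *)
Definition ad (e : fp) (f : form) : nat := epsilon (inhabits 0) (is_ad e f).

Lemma AH_mono : forall e n m f, n <= m -> AH e n f -> AH e m f.
Proof.
  intros e n m f H; induction H; auto.
  intro; apply (AH_up e e); auto.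
Qed.

Lemma AH_exists : forall f e, exists k, AH e k f.
Proof.
  induction f; intros e;
  try (exists 0; apply AH_atom; exact I).
  - destruct (IHf1 e) as [k1 H1]; destruct (IHf2 e) as [k2 H2].
    exists (max k1 k2); apply AH_and; [apply (AH_mono e k1) | apply (AH_mono e k2)]; auto; lia.
  - destruct (IHf1 e) as [k1 H1]; destruct (IHf2 e) as [k2 H2].
    exists (max k1 k2); apply AH_or; [apply (AH_mono e k1) | apply (AH_mono e k2)]; auto; lia.
  - destruct (IHf e) as [k H]; exists k; now apply AH_dia.
  - destruct (IHf e) as [k H]; exists k; now apply AH_box.
  - destruct (IHf Nu) as [k H].
    assert (AH Nu k (FMu n f)) by exact (AH_fix Nu k n f H).
    destruct e; [exists (S k); eapply AH_up; eauto | exists k; auto].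
  - destruct (IHf Mu) as [k H].
    assert (AH Mu k (FNu n f)) by exact (AH_fix Mu k n f H).
    destruct e; [exists k; auto | exists (S k); eapply AH_up; eauto].
Qed.

Lemma is_ad_exists : forall e f, exists k, is_ad e f k.
Proof.
  intros e f.
  destruct (AH_exists f e) as [k Hk].
  assert (Hgen : forall n, n <= k -> AH e n f \/ True -> 
                 (exists j, j <= k /\ AH e j f) -> exists m, is_ad e f m).
  { intros _ _ _ Hex.
    clear Hk.
    destruct Hex as [j [_ Hj]].
    revert Hj.
    induction j as [j IH] using (well_founded_induction lt_wf).
    intro Hj.
    destruct (classic (exists i, i < j /\ AH e i f)) as [[i [Hi1 Hi2]] | Hno].
    - exact (IH i Hi1 Hi2).
    - exists j; split; auto.
      intros i Hi. destruct (le_lt_dec j i); auto.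
      exfalso; apply Hno; exists i; split; auto. }
  apply (Hgen k (le_n k) (or_intror I)); eauto.
Qed.

Lemma ad_spec : forall e f, is_ad e f (ad e f).
Proof.
  intros e f; unfold ad; apply epsilon_spec, is_ad_exists.
Qed.

(* Main.v *)
Require Import Defs.
From Stdlib Require Import Arith Lia List Classical ClassicalEpsilon.
Import ListNotations.

Fixpoint maxvar (f : form) : nat :=
  match f with
  | FVar y => y
  | FTop | FBot | FProp _ | FNProp _ => 0
  | FAnd a b | FOr a b => max (maxvar a) (maxvar b)
  | FDia a | FBox a => maxvar a
  | FMu y a | FNu y a => max y (maxvar a)
  end.

Lemma free_maxvar : forall f w, free_in w f -> w <= maxvar f.
Proof. induction f; simpl; intros w H; try tauto; try (subst; lia);
  try (destruct H as [H|H]; [apply IHf1 in H|apply IHf2 in H]; lia);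
  try (apply IHf in H; lia); try (destruct H as [_ H]; apply IHf in H; lia). Qed.

Lemma bound_maxvar : forall f w, bound_in w f -> w <= maxvar f.
Proof. induction f; simpl; intros w H; try tauto;
  try (destruct H as [H|H]; [apply IHf1 in H|apply IHf2 in H]; lia);
  try (apply IHf in H; lia); try (destruct H as [H|H]; [subst; lia| apply IHf in H; lia]). Qed.

Ltac eqbd := repeat match goal with
  | |- context [Nat.eqb ?a ?b] => destruct (Nat.eqb_spec a b)
  | H : context [Nat.eqb ?a ?b] |- _ => destruct (Nat.eqb_spec a b)
  end.

Lemma subst_notfree : forall c z u, ~ free_in u c -> subst c z u = c.
Proof. induction c; simpl; intros z u H; eqbd; subst; try tauto;
  try (rewrite IHc1, IHc2 by tauto; reflexivity);
  try (rewrite IHc by tauto; reflexivity). Qed.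

Lemma free_subst_keep : forall c z u w, free_in w c -> w <> u -> free_in w (subst c z u).
Proof. induction c; simpl; intros z u w H Hn; eqbd; simpl; subst; try tauto;
  try (destruct H; [left; apply IHc1|right; apply IHc2]; auto);
  try (apply IHc; auto); try (split; [tauto| apply IHc; tauto]). Qed.

Lemma bound_subst_keep : forall c z u w, bound_in w c -> bound_in w (subst c z u).
Proof. induction c; simpl; intros z u w H; eqbd; simpl; subst; try tauto;
  try (destruct H; [left; apply IHc1|right; apply IHc2]; auto);
  try (apply IHc; auto); try (destruct H; [left; auto| right; apply IHc; auto]). Qed.

Lemma free_subst_inv : forall c z u w, free_in w (subst c z u) ->
  (free_in w c /\ w <> u) \/ free_in w z.
Proof. induction c; simpl; intros z u w H; eqbd; simpl in *; try (subst; tauto).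
  all: try (destruct H as [H|H]; [apply IHc1 in H|apply IHc2 in H]; tauto).
  all: try (apply IHc in H; tauto).
  all: try (destruct H as [H1 H2]; apply IHc in H2; tauto).
all: left; split; [auto|congruence]. Qed.

Lemma bound_subst_inv : forall c z u w, bound_in w (subst c z u) -> bound_in w c \/ bound_in w z.
Proof. induction c; simpl; intros z u w H; eqbd; simpl in *; try (subst; tauto).
  all: try (destruct H as [H|H]; [apply IHc1 in H|apply IHc2 in H]; tauto).
  all: try (apply IHc in H; tauto).
  all: try (destruct H as [H|H]; [tauto| apply IHc in H; tauto]).
Qed.

Lemma free_for_notfree : forall c z u, ~ free_in u c -> free_for z u c.
Proof. induction c; simpl; intros z u H; auto;
  try (split; [apply IHc1|apply IHc2]; tauto); try (apply IHc; tauto).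
  - destruct (Nat.eq_dec u n); [left; auto| right; split; [tauto| apply IHc; tauto]].
  - destruct (Nat.eq_dec u n); [left; auto| right; split; [tauto| apply IHc; tauto]].
Qed.

Lemma free_for_notbound : forall c z u, (forall w, free_in w z -> ~ bound_in w c) -> free_for z u c.
Proof. induction c; simpl; intros z u H; auto;
  try (split; [apply IHc1|apply IHc2]; intros w Hw; specialize (H w Hw); tauto);
  try (apply IHc; intros w Hw; specialize (H w Hw); tauto).
  - right; split; [intros _ Hf; apply (H n Hf); auto| apply IHc; intros w Hw; specialize (H w Hw); tauto].
  - right; split; [intros _ Hf; apply (H n Hf); auto| apply IHc; intros w Hw; specialize (H w Hw); tauto].
Qed.

Lemma size_rename : forall c x x', size (subst c (FVar x') x) = size c.
Proof. induction c; simpl; intros; eqbd; simpl; auto. Qed.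

Lemma rename_compose : forall c x x' z, ~ free_in x' c -> ~ bound_in x' c ->
  subst (subst c (FVar x') x) z x' = subst c z x.
Proof. induction c; simpl; intros x x' z Hf Hb; eqbd; simpl; eqbd; subst; try tauto;
  try (rewrite IHc1, IHc2 by tauto; reflexivity);
  try (rewrite IHc by tauto; reflexivity);
  try (rewrite subst_notfree by tauto; reflexivity). Qed.

Lemma free_rename_back : forall c u v, ~ free_in v c -> free_in v (subst c (FVar v) u) -> free_in u c.
Proof. induction c; simpl; intros u v Hf H; eqbd; simpl in *; subst; try tauto.
  - destruct H as [H|H]; [left; eapply IHc1|right; eapply IHc2]; eauto.
  - destruct H as [H|H]; [left; eapply IHc1|right; eapply IHc2]; eauto.
  - eapply IHc; eauto.
  - eapply IHc; eauto.
  - split; [auto| eapply IHc; [|apply H]; tauto].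
  - split; [auto| eapply IHc; [|apply H]; tauto].
Qed.

Lemma free_for_rename : forall c x x' z, free_for z x c -> ~ free_in x' c -> ~ bound_in x' c ->
  free_for z x' (subst c (FVar x') x).
Proof. induction c; simpl; intros x x' z Hff Hf Hb; eqbd; simpl; subst; try tauto;
  try (split; [apply IHc1|apply IHc2]; tauto); try (apply IHc; tauto).
  - right; split; [tauto| apply free_for_notfree; tauto].
  - right. destruct Hff as [Hff|[H1 H2]]; [tauto|]. split; [|apply IHc; tauto].
    intro Hx; apply H1; eapply free_rename_back; [|apply Hx]; tauto.
  - right; split; [tauto| apply free_for_notfree; tauto].
  - right. destruct Hff as [Hff|[H1 H2]]; [tauto|]. split; [|apply IHc; tauto].
    intro Hx; apply H1; eapply free_rename_back; [|apply Hx]; tauto.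
Qed.
Inductive Abs : list nat -> form -> form -> Prop :=
| Abs_cut : forall B f v, (forall w, free_in w f -> ~ In w B) -> ~ In v B -> Abs B f (FVar v)
| Abs_atom : forall B f, atomic f -> Abs B f f
| Abs_and : forall B a b a' b', Abs B a a' -> Abs B b b' -> Abs B (FAnd a b) (FAnd a' b')
| Abs_or : forall B a b a' b', Abs B a a' -> Abs B b b' -> Abs B (FOr a b) (FOr a' b')
| Abs_dia : forall B a a', Abs B a a' -> Abs B (FDia a) (FDia a')
| Abs_box : forall B a a', Abs B a a' -> Abs B (FBox a) (FBox a')
| Abs_mu : forall B x a a', Abs (x :: B) a a' -> Abs B (FMu x a) (FMu x a')
| Abs_nu : forall B x a a', Abs (x :: B) a a' -> Abs B (FNu x a) (FNu x a').

Lemma Abs_weaken : forall B f g, Abs B f g -> forall B', incl B' B -> Abs B' f g.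
Proof. induction 1; intros B' Hi; try (constructor; auto; fail).
  - apply Abs_cut; [intros w Hw Hin; apply (H w Hw); auto| intro Hin; apply H0; auto].
  - apply Abs_mu; apply IHAbs; intros w [Hw|Hw]; [left; auto| right; auto].
  - apply Abs_nu; apply IHAbs; intros w [Hw|Hw]; [left; auto| right; auto].
Qed.

Lemma Abs_free : forall B f g, Abs B f g -> forall w, free_in w g -> free_in w f \/ ~ In w B.
Proof. induction 1; simpl; intros w Hw; try tauto.
  - subst; tauto.
  - destruct Hw as [Hw|Hw]; [apply IHAbs1 in Hw|apply IHAbs2 in Hw]; tauto.
  - destruct Hw as [Hw|Hw]; [apply IHAbs1 in Hw|apply IHAbs2 in Hw]; tauto.
  - apply IHAbs in Hw; tauto.
  - apply IHAbs in Hw; tauto.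
  - destruct Hw as [Hn Hw]; apply IHAbs in Hw; simpl in Hw; tauto.
  - destruct Hw as [Hn Hw]; apply IHAbs in Hw; simpl in Hw; tauto.
Qed.

Lemma Abs_free_closed : forall B f g, Abs B f g -> (forall w, free_in w f -> ~ In w B) ->
  forall w, free_in w g -> ~ In w B.
Proof. intros B f g H Hc w Hw; destruct (Abs_free B f g H w Hw); auto. Qed.

Definition sfold (L : list (nat * form)) (c : form) : form :=
  fold_left (fun acc p => subst acc (snd p) (fst p)) L c.

Fixpoint ok (L : list (nat * form)) (c : form) : Prop :=
  match L with
  | [] => True
  | p :: L' => free_for (snd p) (fst p) c /\ ok L' (subst c (snd p) (fst p))
  end.

Lemma sfold_cons : forall p L c, sfold (p :: L) c = sfold L (subst c (snd p) (fst p)).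
Proof. reflexivity. Qed.

Lemma sfold_app : forall L1 L2 c, sfold (L1 ++ L2) c = sfold L2 (sfold L1 c).
Proof. intros; unfold sfold; apply fold_left_app. Qed.

Lemma ok_app : forall L1 L2 c, ok L1 c -> ok L2 (sfold L1 c) -> ok (L1 ++ L2) c.
Proof. induction L1; simpl; intros L2 c H1 H2; auto. destruct H1; split; auto. Qed.

Lemma sfold_free : forall L c w, free_in w (sfold L c) -> free_in w c \/ exists p, In p L /\ free_in w (snd p).
Proof. induction L; simpl; intros c w H; auto.
  apply IHL in H; destruct H as [H|[p [Hp Hw]]].
  - apply free_subst_inv in H; destruct H as [[H _]|H]; [left; auto| right; exists a; auto].
  - right; exists p; auto.
Qed.

Definition dom_notfree (L : list (nat * form)) (q : form) := forall p, In p L -> ~ free_in (fst p) q.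

Lemma sfold_and_l : forall L p q, dom_notfree L q -> sfold L (FAnd p q) = FAnd (sfold L p) q.
Proof. induction L; simpl; intros p q H; auto. rewrite (subst_notfree q) by (apply H; simpl; auto).
  apply IHL; intros r Hr; apply H; simpl; auto. Qed.
Lemma sfold_and_r : forall L p q, dom_notfree L p -> sfold L (FAnd p q) = FAnd p (sfold L q).
Proof. induction L; simpl; intros p q H; auto. rewrite (subst_notfree p) by (apply H; simpl; auto).
  apply IHL; intros r Hr; apply H; simpl; auto. Qed.
Lemma sfold_or_l : forall L p q, dom_notfree L q -> sfold L (FOr p q) = FOr (sfold L p) q.
Proof. induction L; simpl; intros p q H; auto. rewrite (subst_notfree q) by (apply H; simpl; auto).
  apply IHL; intros r Hr; apply H; simpl; auto. Qed.
Lemma sfold_or_r : forall L p q, dom_notfree L p -> sfold L (FOr p q) = FOr p (sfold L q).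
Proof. induction L; simpl; intros p q H; auto. rewrite (subst_notfree p) by (apply H; simpl; auto).
  apply IHL; intros r Hr; apply H; simpl; auto. Qed.
Lemma sfold_dia : forall L p, sfold L (FDia p) = FDia (sfold L p).
Proof. induction L; simpl; intros; auto. Qed.
Lemma sfold_box : forall L p, sfold L (FBox p) = FBox (sfold L p).
Proof. induction L; simpl; intros; auto. Qed.
Lemma sfold_mu : forall L z p, (forall r, In r L -> fst r <> z) -> sfold L (FMu z p) = FMu z (sfold L p).
Proof. induction L; simpl; intros z p H; auto. destruct (Nat.eqb_spec (fst a) z).
  - exfalso; apply (H a); auto.
  - apply IHL; intros r Hr; apply H; auto. Qed.
Lemma sfold_nu : forall L z p, (forall r, In r L -> fst r <> z) -> sfold L (FNu z p) = FNu z (sfold L p).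
Proof. induction L; simpl; intros z p H; auto. destruct (Nat.eqb_spec (fst a) z).
  - exfalso; apply (H a); auto.
  - apply IHL; intros r Hr; apply H; auto. Qed.

Lemma ok_and_l : forall L p q, ok L p -> dom_notfree L q -> ok L (FAnd p q).
Proof. induction L; simpl; intros p q H1 H2; auto. destruct H1 as [H1 H3]. split.
  - split; auto; apply free_for_notfree; apply H2; simpl; auto.
  - rewrite (subst_notfree q) by (apply H2; simpl; auto). apply IHL; auto.
    intros r Hr; apply H2; simpl; auto. Qed.
Lemma ok_and_r : forall L p q, ok L q -> dom_notfree L p -> ok L (FAnd p q).
Proof. induction L; simpl; intros p q H1 H2; auto. destruct H1 as [H1 H3]. split.
  - split; auto; apply free_for_notfree; apply H2; simpl; auto.
  - rewrite (subst_notfree p) by (apply H2; simpl; auto). apply IHL; auto.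
    intros r Hr; apply H2; simpl; auto. Qed.
Lemma ok_or_l : forall L p q, ok L p -> dom_notfree L q -> ok L (FOr p q).
Proof. induction L; simpl; intros p q H1 H2; auto. destruct H1 as [H1 H3]. split.
  - split; auto; apply free_for_notfree; apply H2; simpl; auto.
  - rewrite (subst_notfree q) by (apply H2; simpl; auto). apply IHL; auto.
    intros r Hr; apply H2; simpl; auto. Qed.
Lemma ok_or_r : forall L p q, ok L q -> dom_notfree L p -> ok L (FOr p q).
Proof. induction L; simpl; intros p q H1 H2; auto. destruct H1 as [H1 H3]. split.
  - split; auto; apply free_for_notfree; apply H2; simpl; auto.
  - rewrite (subst_notfree p) by (apply H2; simpl; auto). apply IHL; auto.
    intros r Hr; apply H2; simpl; auto. Qed.
Lemma ok_dia : forall L p, ok L p -> ok L (FDia p).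
Proof. induction L; simpl; intros p H; auto. destruct H; split; auto. Qed.
Lemma ok_box : forall L p, ok L p -> ok L (FBox p).
Proof. induction L; simpl; intros p H; auto. destruct H; split; auto. Qed.
Lemma ok_mu : forall L z p, ok L p -> (forall r, In r L -> fst r <> z /\ ~ free_in z (snd r)) -> ok L (FMu z p).
Proof. induction L; simpl; intros z p H1 H2; auto. destruct H1 as [H1 H3].
  destruct (H2 a (or_introl eq_refl)) as [Ha1 Ha2]. split.
  - right; split; auto.
  - destruct (Nat.eqb_spec (fst a) z); [congruence|]. apply IHL; auto.
Qed.
Lemma ok_nu : forall L z p, ok L p -> (forall r, In r L -> fst r <> z /\ ~ free_in z (snd r)) -> ok L (FNu z p).
Proof. induction L; simpl; intros z p H1 H2; auto. destruct H1 as [H1 H3].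
  destruct (H2 a (or_introl eq_refl)) as [Ha1 Ha2]. split.
  - right; split; auto.
  - destruct (Nat.eqb_spec (fst a) z); [congruence|]. apply IHL; auto.
Qed.

Lemma ok_AH : forall e n L c, ok L c -> AH e n c -> (forall p, In p L -> AH e n (snd p)) -> AH e n (sfold L c).
Proof. induction L; simpl; intros c Hok Hc HL; auto. destruct Hok.
  apply IHL; auto. apply AH_subst; auto. Qed.

Definition Dconc (s : form) (G : nat) (ch : form) (B : list nat) (c : form) (N : nat) : Prop :=
  exists c1 L M, N <= M /\ Abs B ch c1 /\ c = sfold L c1 /\ ok L c1 /\
   (forall p, In p L -> Abs [] s (snd p) /\ (forall w, free_in w (snd p) -> ~ In w B) /\
                        maxvar (snd p) < G /\ N <= fst p < M) /\
   (forall w, free_in w c1 -> w < G \/ N <= w < M).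

Lemma D_nf : forall s y G ch B c N, ~ free_in y ch -> Abs B (subst ch s y) c -> maxvar c < G ->
  Dconc s G ch B c N.
Proof. intros s y G ch B c N Hn HA Hc. rewrite subst_notfree in HA by auto.
  exists c, [], N; repeat split; auto; simpl; try tauto.
  intros w Hw; left; apply free_maxvar in Hw; lia. Qed.

Lemma D_cut : forall s y G ch B N v,
  (free_in y ch -> ~ In y B /\ forall w, free_in w s -> ~ In w B) ->
  (forall w, free_in w (subst ch s y) -> ~ In w B) -> ~ In v B -> v < G ->
  Dconc s G ch B (FVar v) N.
Proof. intros s y G ch B N v Hy Hcl Hv HvG.
  exists (FVar v), [], N; repeat split; auto; simpl; try tauto.
  - apply Abs_cut; auto. intros w Hw. destruct (Nat.eq_dec w y).
    + subst; tauto.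
    + apply Hcl; apply free_subst_keep; auto.
  - intros w Hw; subst; lia.
Qed.

Lemma D : forall s y G ch B c N,
  free_for s y ch ->
  (free_in y ch -> ~ In y B /\ forall w, free_in w s -> ~ In w B) ->
  Abs B (subst ch s y) c ->
  maxvar ch < G -> maxvar s < G -> maxvar c < G -> (forall w, In w B -> w < G) -> G <= N ->
  Dconc s G ch B c N.
Proof.
  intros s y G ch. induction ch; intros B c N Hff Hy HA Hch Hs Hc HB HG.
  all: try (eapply D_nf; eauto; simpl; tauto).
  -
    simpl in Hy, Hch.
    destruct (classic (free_in y (FVar n))) as [Hfr|Hnf]; [|eapply D_nf; eauto].
    simpl in Hfr; subst n. simpl in HA. rewrite Nat.eqb_refl in HA.
    destruct (Hy eq_refl) as [Hy1 Hy2].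
    exists (FVar N), [(N, c)], (S N). split; [lia|]. split.
    { apply Abs_cut; [simpl; intros w Hw; subst; auto| intro Hi; apply HB in Hi; lia]. }
    split; [simpl; rewrite Nat.eqb_refl; reflexivity|].
    split; [simpl; auto|].
    split.
    { intros p [Hp|[]]; subst p; simpl. split; [|split; [|split; lia]].
      - eapply Abs_weaken; eauto; intros w [].
      - eapply Abs_free_closed; eauto. }
    simpl; intros w Hw; subst; right; lia.
  -
    destruct (classic (free_in y (FAnd ch1 ch2))) as [Hfr|Hnf]; [|eapply D_nf; eauto].
    simpl in HA, Hff, Hch. inversion HA; subst.
    + eapply D_cut; eauto; simpl in *; lia.
    + simpl in *; tauto.
    + match goal with Ha : Abs B (subst ch1 s y) _, Hb : Abs B (subst ch2 s y) _ |- _ =>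
        rename Ha into HAa0, Hb into HAb0 end.
      assert (Hy1 : free_in y ch1 -> ~ In y B /\ forall w, free_in w s -> ~ In w B) by (intro; apply Hy; simpl; auto).
      assert (Hy2 : free_in y ch2 -> ~ In y B /\ forall w, free_in w s -> ~ In w B) by (intro; apply Hy; simpl; auto).
      simpl in Hc.
      destruct (IHch1 B _ N ltac:(tauto) Hy1 HAa0 ltac:(lia) Hs ltac:(lia) HB HG)
        as (c1a & La & M1 & HM1 & HAa & Hea & Hoka & HLa & HFa).
      destruct (IHch2 B _ M1 ltac:(tauto) Hy2 HAb0 ltac:(lia) Hs ltac:(lia) HB ltac:(lia))
        as (c1b & Lb & M2 & HM2 & HAb & Heb & Hokb & HLb & HFb).
      assert (D1 : dom_notfree La c1b).
      { intros p Hp Hf; apply HFb in Hf; apply HLa in Hp; lia. }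
      assert (D2 : dom_notfree Lb (sfold La c1a)).
      { intros p Hp Hf; apply sfold_free in Hf; apply HLb in Hp.
        destruct Hf as [Hf|[q [Hq Hw]]].
        - apply HFa in Hf; lia.
        - apply HLa in Hq; apply free_maxvar in Hw; lia. }
      exists (FAnd c1a c1b), (La ++ Lb), M2. split; [lia|]. split; [constructor; auto|].
      split; [rewrite sfold_app, sfold_and_l by auto; rewrite sfold_and_r by auto; congruence|].
      split; [apply ok_app; [apply ok_and_l; auto|]; rewrite sfold_and_l by auto; apply ok_and_r; auto|].
      split.
      { intros p Hp; apply in_app_or in Hp; destruct Hp as [Hp|Hp]; [apply HLa in Hp|apply HLb in Hp];
        destruct Hp as (Q1&Q2&Q3&Q4); repeat split; auto; lia. }
      intros w [Hw|Hw]; [apply HFa in Hw|apply HFb in Hw]; lia.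
  -
    destruct (classic (free_in y (FOr ch1 ch2))) as [Hfr|Hnf]; [|eapply D_nf; eauto].
    simpl in HA, Hff, Hch. inversion HA; subst.
    + eapply D_cut; eauto; simpl in *; lia.
    + simpl in *; tauto.
    + match goal with Ha : Abs B (subst ch1 s y) _, Hb : Abs B (subst ch2 s y) _ |- _ =>
        rename Ha into HAa0, Hb into HAb0 end.
      assert (Hy1 : free_in y ch1 -> ~ In y B /\ forall w, free_in w s -> ~ In w B) by (intro; apply Hy; simpl; auto).
      assert (Hy2 : free_in y ch2 -> ~ In y B /\ forall w, free_in w s -> ~ In w B) by (intro; apply Hy; simpl; auto).
      simpl in Hc.
      destruct (IHch1 B _ N ltac:(tauto) Hy1 HAa0 ltac:(lia) Hs ltac:(lia) HB HG)
        as (c1a & La & M1 & HM1 & HAa & Hea & Hoka & HLa & HFa).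
      destruct (IHch2 B _ M1 ltac:(tauto) Hy2 HAb0 ltac:(lia) Hs ltac:(lia) HB ltac:(lia))
        as (c1b & Lb & M2 & HM2 & HAb & Heb & Hokb & HLb & HFb).
      assert (D1 : dom_notfree La c1b).
      { intros p Hp Hf; apply HFb in Hf; apply HLa in Hp; lia. }
      assert (D2 : dom_notfree Lb (sfold La c1a)).
      { intros p Hp Hf; apply sfold_free in Hf; apply HLb in Hp.
        destruct Hf as [Hf|[q [Hq Hw]]].
        - apply HFa in Hf; lia.
        - apply HLa in Hq; apply free_maxvar in Hw; lia. }
      exists (FOr c1a c1b), (La ++ Lb), M2. split; [lia|]. split; [constructor; auto|].
      split; [rewrite sfold_app, sfold_or_l by auto; rewrite sfold_or_r by auto; congruence|].
      split; [apply ok_app; [apply ok_or_l; auto|]; rewrite sfold_or_l by auto; apply ok_or_r; auto|].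
      split.
      { intros p Hp; apply in_app_or in Hp; destruct Hp as [Hp|Hp]; [apply HLa in Hp|apply HLb in Hp];
        destruct Hp as (Q1&Q2&Q3&Q4); repeat split; auto; lia. }
      intros w [Hw|Hw]; [apply HFa in Hw|apply HFb in Hw]; lia.
  -
    destruct (classic (free_in y (FDia ch))) as [Hfr|Hnf]; [|eapply D_nf; eauto].
    simpl in HA, Hff, Hch. inversion HA; subst.
    + eapply D_cut; eauto; simpl in *; lia.
    + simpl in *; tauto.
    + match goal with Ha : Abs B (subst ch s y) _ |- _ => rename Ha into HAa0 end.
      simpl in Hc, Hfr.
      destruct (IHch B _ N Hff Hy HAa0 ltac:(lia) Hs ltac:(lia) HB HG)
        as (c1a & La & M1 & HM1 & HAa & Hea & Hoka & HLa & HFa).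
      exists (FDia c1a), La, M1. split; [lia|]. split; [constructor; auto|].
      split; [rewrite sfold_dia; congruence|].
      split; [apply ok_dia; auto|].
      split; [exact HLa|]. exact HFa.
  -
    destruct (classic (free_in y (FBox ch))) as [Hfr|Hnf]; [|eapply D_nf; eauto].
    simpl in HA, Hff, Hch. inversion HA; subst.
    + eapply D_cut; eauto; simpl in *; lia.
    + simpl in *; tauto.
    + match goal with Ha : Abs B (subst ch s y) _ |- _ => rename Ha into HAa0 end.
      simpl in Hc, Hfr.
      destruct (IHch B _ N Hff Hy HAa0 ltac:(lia) Hs ltac:(lia) HB HG)
        as (c1a & La & M1 & HM1 & HAa & Hea & Hoka & HLa & HFa).
      exists (FBox c1a), La, M1. split; [lia|]. split; [constructor; auto|].
      split; [rewrite sfold_box; congruence|].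
      split; [apply ok_box; auto|].
      split; [exact HLa|]. exact HFa.
  -
    destruct (classic (free_in y (FMu n ch))) as [Hfr|Hnf]; [|eapply D_nf; eauto].
    simpl in Hfr. destruct Hfr as [Hyn Hfr].
    simpl in HA, Hff, Hch. destruct (Nat.eqb_spec y n); [congruence|].
    destruct Hff as [Hff|[Hff1 Hff2]]; [congruence|].
    inversion HA; subst.
    + eapply D_cut; eauto; simpl in *; try lia.
      destruct (Nat.eqb_spec y n); [congruence|]. exact H.
    + simpl in *; tauto.
    + match goal with Ha : Abs (n :: B) (subst ch s y) _ |- _ => rename Ha into HAa0 end.
      simpl in Hc.
      assert (Hy' : free_in y ch -> ~ In y (n :: B) /\ forall w, free_in w s -> ~ In w (n :: B)).
      { intro Hf. destruct (Hy ltac:(simpl; auto)) as [Hy1 Hy2]. split.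
        - intros [E|E]; [congruence|tauto].
        - intros w Hw [E|E]; [subst; apply (Hff1 Hf Hw)| apply (Hy2 w Hw E)]. }
      assert (HB' : forall w, In w (n :: B) -> w < G).
      { intros w [E|E]; [subst; lia| auto]. }
      destruct (IHch (n :: B) _ N Hff2 Hy' HAa0 ltac:(lia) Hs ltac:(lia) HB' HG)
        as (c1a & La & M1 & HM1 & HAa & Hea & Hoka & HLa & HFa).
      exists (FMu n c1a), La, M1. split; [lia|]. split; [constructor; auto|].
      split; [rewrite sfold_mu; [congruence|]; intros r Hr; apply HLa in Hr; lia|].
      split.
      { apply ok_mu; auto. intros r Hr; apply HLa in Hr; destruct Hr as (Q1&Q2&Q3&Q4).
        split; [lia|]. intro Hz; apply (Q2 n Hz); simpl; auto. }
      split.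
      { intros p Hp; apply HLa in Hp; destruct Hp as (Q1&Q2&Q3&Q4).
        split; [exact Q1|split; [intros w Hw Hin; apply (Q2 w Hw); simpl; auto| split; [exact Q3| exact Q4]]]. }
      simpl; intros w [_ Hw]; apply HFa in Hw; lia.
  -
    destruct (classic (free_in y (FNu n ch))) as [Hfr|Hnf]; [|eapply D_nf; eauto].
    simpl in Hfr. destruct Hfr as [Hyn Hfr].
    simpl in HA, Hff, Hch. destruct (Nat.eqb_spec y n); [congruence|].
    destruct Hff as [Hff|[Hff1 Hff2]]; [congruence|].
    inversion HA; subst.
    + eapply D_cut; eauto; simpl in *; try lia.
      destruct (Nat.eqb_spec y n); [congruence|]. exact H.
    + simpl in *; tauto.
    + match goal with Ha : Abs (n :: B) (subst ch s y) _ |- _ => rename Ha into HAa0 end.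
      simpl in Hc.
      assert (Hy' : free_in y ch -> ~ In y (n :: B) /\ forall w, free_in w s -> ~ In w (n :: B)).
      { intro Hf. destruct (Hy ltac:(simpl; auto)) as [Hy1 Hy2]. split.
        - intros [E|E]; [congruence|tauto].
        - intros w Hw [E|E]; [subst; apply (Hff1 Hf Hw)| apply (Hy2 w Hw E)]. }
      assert (HB' : forall w, In w (n :: B) -> w < G).
      { intros w [E|E]; [subst; lia| auto]. }
      destruct (IHch (n :: B) _ N Hff2 Hy' HAa0 ltac:(lia) Hs ltac:(lia) HB' HG)
        as (c1a & La & M1 & HM1 & HAa & Hea & Hoka & HLa & HFa).
      exists (FNu n c1a), La, M1. split; [lia|]. split; [constructor; auto|].
      split; [rewrite sfold_nu; [congruence|]; intros r Hr; apply HLa in Hr; lia|].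
      split.
      { apply ok_nu; auto. intros r Hr; apply HLa in Hr; destruct Hr as (Q1&Q2&Q3&Q4).
        split; [lia|]. intro Hz; apply (Q2 n Hz); simpl; auto. }
      split.
      { intros p Hp; apply HLa in Hp; destruct Hp as (Q1&Q2&Q3&Q4).
        split; [exact Q1|split; [intros w Hw Hin; apply (Q2 w Hw); simpl; auto| split; [exact Q3| exact Q4]]]. }
      simpl; intros w [_ Hw]; apply HFa in Hw; lia.
Qed.

Lemma AH_var0 : forall e n v, AH e n (FVar v).
Proof. intros; apply (AH_mono e 0); [lia| apply AH_atom; exact I]. Qed.

Lemma AH_abs : forall e n f, AH e n f -> forall c, Abs [] f c -> AH e n c.
Proof.
  induction 1; intros c HA.
  - inversion HA; subst; try apply AH_var0; try (apply AH_atom; auto; fail); simpl in *; tauto.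
  - inversion HA; subst; [apply AH_var0| simpl in *; tauto | apply AH_and; auto].
  - inversion HA; subst; [apply AH_var0| simpl in *; tauto | apply AH_or; auto].
  - inversion HA; subst; [apply AH_var0| simpl in *; tauto | apply AH_dia; auto].
  - inversion HA; subst; [apply AH_var0| simpl in *; tauto | apply AH_box; auto].
  - destruct e; simpl in HA; inversion HA; subst; try apply AH_var0; try (simpl in *; tauto).
    + apply (AH_fix Mu n x a'). apply IHAH. eapply Abs_weaken; eauto; intros w [].
    + apply (AH_fix Nu n x a'). apply IHAH. eapply Abs_weaken; eauto; intros w [].
  - set (G := S (max (maxvar chi) (max (maxvar xi) (maxvar c)))).
    destruct (D xi x G chi [] c G H1 ltac:(intros _; split; [intros []| intros w _ []]) HA
      ltac:(unfold G; lia) ltac:(unfold G; lia) ltac:(unfold G; lia) ltac:(intros w []) ltac:(lia))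
      as (c1 & L & M & HM & HA1 & He & Hok & HL & HF).
    rewrite He. apply ok_AH; auto.
    intros p Hp; apply HL in Hp; apply IHAH2; tauto.
  - apply (AH_up e e'). auto.
Qed.

Fixpoint abs (xi : form) (x' : nat) (B : list nat) (f : form) {struct f} : form :=
  if excluded_middle_informative (f = xi /\ forall w, free_in w xi -> ~ In w B) then FVar x' else
  match f with
  | FAnd a b => FAnd (abs xi x' B a) (abs xi x' B b)
  | FOr a b => FOr (abs xi x' B a) (abs xi x' B b)
  | FDia a => FDia (abs xi x' B a)
  | FBox a => FBox (abs xi x' B a)
  | FMu y a => FMu y (abs xi x' (y :: B) a)
  | FNu y a => FNu y (abs xi x' (y :: B) a)
  | _ => f
  end.

Lemma size_pos : forall f, 1 <= size f.
Proof. destruct f; simpl; lia. Qed.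

Ltac absEM := match goal with |- context [excluded_middle_informative ?P] =>
  destruct (excluded_middle_informative P) as [[HE HC]|Hn] end.

Lemma A1 : forall xi x' f B, ~ In x' B -> ~ bound_in x' f -> Abs B f (abs xi x' B f).
Proof. intros xi x'. induction f; intros B HB Hb; simpl; absEM.
  all: try (apply Abs_cut; [subst; auto| auto]; fail).
  all: try (apply Abs_atom; exact I).
  all: simpl in Hb; constructor.
  all: try (apply IHf1; tauto); try (apply IHf2; tauto); try (apply IHf; tauto).
  all: apply IHf; [intros [E|E]; [subst; tauto| tauto]| tauto].
Qed.

Lemma A2 : forall xi x' f B, size (abs xi x' B f) <= size f.
Proof. intros xi x'. induction f; intros B; simpl; absEM; simpl; try (pose proof (size_pos xi); lia).
  all: try (specialize (IHf1 B); specialize (IHf2 B); lia).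
  all: try (specialize (IHf B); lia).
  all: match goal with |- context [?m :: ?B0] => specialize (IHf (m :: B0)); lia end.
Qed.

Lemma A3 : forall xi x' f B, ~ bound_in x' f -> ~ free_in x' xi ->
  subst (abs xi x' B f) xi x' = subst f xi x'.
Proof. intros xi x'. induction f; intros B Hb Hx; simpl; absEM; simpl.
  all: try (rewrite Nat.eqb_refl; match goal with HE : ?F = ?X |- ?X = _ =>
         change (X = subst F X x'); rewrite subst_notfree; [symmetry; exact HE| rewrite HE; exact Hx] end; fail).
  all: simpl in Hb; auto.
  all: try (rewrite IHf1, IHf2 by tauto; auto; fail).
  all: try (rewrite IHf by tauto; auto; fail).
  all: match goal with |- context [Nat.eqb ?a ?m] => destruct (Nat.eqb_spec a m) end; try tauto.
  all: rewrite IHf by tauto; auto.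
Qed.

Lemma A4a : forall xi x' f B, free_in x' (abs xi x' B f) -> free_in x' f \/ (forall w, free_in w xi -> ~ In w B).
Proof. intros xi x'. induction f; intros B H; simpl in H; revert H; absEM; simpl; intro H; auto.
  all: try (destruct H as [H|H]; [apply IHf1 in H|apply IHf2 in H]; tauto).
  all: try (apply IHf in H; tauto).
  all: destruct H as [H1 H]; apply IHf in H; destruct H as [H|H]; [left; auto| right; intros w Hw Hin; apply (H w Hw); simpl; auto].
Qed.

Lemma A4 : forall xi x' f B, free_for xi x' f -> ~ bound_in x' f -> free_for xi x' (abs xi x' B f).
Proof. intros xi x'. induction f; intros B Hff Hb; simpl; absEM; simpl; auto; simpl in Hff, Hb;
  try (split; [apply IHf1|apply IHf2]; tauto); try (apply IHf; tauto).
  all: destruct Hff as [Hff|[H1 H2]]; [tauto|]; right; split; [|apply IHf; tauto].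
  all: intro Hx; apply A4a in Hx; destruct Hx as [Hx|Hx]; [auto| intro Hn'; apply (Hx n Hn'); simpl; auto].
Qed.

Lemma A5a : forall xi x' f B w, free_in w (abs xi x' B f) -> free_in w f \/ w = x'.
Proof. intros xi x'. induction f; intros B w H; simpl in H; revert H; absEM; simpl; intro H; auto.
  all: try (destruct H as [H|H]; [apply IHf1 in H|apply IHf2 in H]; tauto).
  all: try (apply IHf in H; tauto).
  all: destruct H as [H1 H]; apply IHf in H; tauto.
Qed.

Lemma A5b : forall xi x' f B w, bound_in w (abs xi x' B f) -> bound_in w f.
Proof. intros xi x'. induction f; intros B w H; simpl in H; revert H; absEM; simpl; intro H; try tauto.
  all: try (destruct H as [H|H]; [apply IHf1 in H|apply IHf2 in H]; tauto).
  all: try (apply IHf in H; tauto).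
  all: destruct H as [H|H]; [auto| apply IHf in H; tauto].
Qed.

Fixpoint NoOcc (xi : form) (B : list nat) (f : form) : Prop :=
  (f = xi -> exists w, free_in w xi /\ In w B) /\
  match f with
  | FAnd a b | FOr a b => NoOcc xi B a /\ NoOcc xi B b
  | FDia a | FBox a => NoOcc xi B a
  | FMu y a | FNu y a => NoOcc xi (y :: B) a
  | _ => True
  end.

Lemma top_helper : forall xi x' B f g, (g = f \/ x' <= maxvar g) ->
  ~ (f = xi /\ forall w, free_in w xi -> ~ In w B) -> maxvar xi < x' ->
  (g = xi -> exists w, free_in w xi /\ In w B).
Proof. intros xi x' B f g Hg Hn Hm Heq; subst g. destruct Hg as [Hg|Hg]; [|lia].
  apply NNPP; intro Hne; apply Hn; split; [auto| intros w Hw Hin; apply Hne; exists w; auto]. Qed.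

Lemma A6 : forall xi x' f B, 1 < size xi -> maxvar xi < x' ->
  NoOcc xi B (abs xi x' B f) /\ (abs xi x' B f = f \/ x' <= maxvar (abs xi x' B f)).
Proof. intros xi x'. induction f; intros B Hs Hm; simpl; absEM; simpl.
  all: try (split; [split; [intro E; rewrite <- E in Hs; simpl in Hs; lia| exact I]| right; simpl; lia]; fail).
  all: try (split; [split; [eapply top_helper; [left; reflexivity| eauto| auto]| exact I]| left; reflexivity]).
  - destruct (IHf1 B Hs Hm) as [N1 C1]; destruct (IHf2 B Hs Hm) as [N2 C2].
    assert (C : FAnd (abs xi x' B f1) (abs xi x' B f2) = FAnd f1 f2 \/
                x' <= maxvar (FAnd (abs xi x' B f1) (abs xi x' B f2))).
    { destruct C1 as [C1|C1]; [destruct C2 as [C2|C2]; [left; congruence|]|]; right; simpl; lia. }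
    split; [split; [eapply top_helper; eauto| auto]| exact C].
  - destruct (IHf1 B Hs Hm) as [N1 C1]; destruct (IHf2 B Hs Hm) as [N2 C2].
    assert (C : FOr (abs xi x' B f1) (abs xi x' B f2) = FOr f1 f2 \/
                x' <= maxvar (FOr (abs xi x' B f1) (abs xi x' B f2))).
    { destruct C1 as [C1|C1]; [destruct C2 as [C2|C2]; [left; congruence|]|]; right; simpl; lia. }
    split; [split; [eapply top_helper; eauto| auto]| exact C].
  - destruct (IHf B Hs Hm) as [N1 C1].
    assert (C : FDia (abs xi x' B f) = FDia f \/ x' <= maxvar (FDia (abs xi x' B f))).
    { destruct C1 as [C1|C1]; [left; congruence|right; simpl; lia]. }
    split; [split; [eapply top_helper; eauto| auto]| exact C].
  - destruct (IHf B Hs Hm) as [N1 C1].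
    assert (C : FBox (abs xi x' B f) = FBox f \/ x' <= maxvar (FBox (abs xi x' B f))).
    { destruct C1 as [C1|C1]; [left; congruence|right; simpl; lia]. }
    split; [split; [eapply top_helper; eauto| auto]| exact C].
  - destruct (IHf (n :: B) Hs Hm) as [N1 C1].
    assert (C : FMu n (abs xi x' (n :: B) f) = FMu n f \/ x' <= maxvar (FMu n (abs xi x' (n :: B) f))).
    { destruct C1 as [C1|C1]; [left; congruence|right; simpl; lia]. }
    split; [split; [eapply top_helper; eauto| auto]| exact C].
  - destruct (IHf (n :: B) Hs Hm) as [N1 C1].
    assert (C : FNu n (abs xi x' (n :: B) f) = FNu n f \/ x' <= maxvar (FNu n (abs xi x' (n :: B) f))).
    { destruct C1 as [C1|C1]; [left; congruence|right; simpl; lia]. }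
    split; [split; [eapply top_helper; eauto| auto]| exact C].
Qed.

Lemma NoOcc_top : forall xi B f, NoOcc xi B f -> f = xi -> exists w, free_in w xi /\ In w B.
Proof. intros xi B f; destruct f; simpl; tauto. Qed.

Lemma NoOcc_sub : forall xi y c B, NoOcc xi B (subst c xi y) -> free_in y c -> free_for xi y c ->
  (forall w, free_in w xi -> ~ In w B) -> False.
Proof. intros xi y. induction c; intros B HN Hf Hff HB; simpl in Hf, Hff; try tauto.
  - subst n; simpl in HN; rewrite Nat.eqb_refl in HN.
    destruct (NoOcc_top _ _ _ HN (eq_refl _)) as [w [Hw Hi]]; apply (HB w Hw Hi).
  - simpl in HN; destruct HN as [_ [N1 N2]]; destruct Hf as [Hf|Hf]; [eapply IHc1|eapply IHc2]; eauto; tauto.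
  - simpl in HN; destruct HN as [_ [N1 N2]]; destruct Hf as [Hf|Hf]; [eapply IHc1|eapply IHc2]; eauto; tauto.
  - simpl in HN; destruct HN as [_ N1]; eapply IHc; eauto.
  - simpl in HN; destruct HN as [_ N1]; eapply IHc; eauto.
  - destruct Hf as [Hyn Hf]; simpl in HN; destruct (Nat.eqb_spec y n); [congruence|].
    destruct HN as [_ N1]; destruct Hff as [Hff|[H1 H2]]; [congruence|].
    eapply IHc; eauto. intros w Hw [E|E]; [subst; apply (H1 Hf Hw)| apply (HB w Hw E)].
  - destruct Hf as [Hyn Hf]; simpl in HN; destruct (Nat.eqb_spec y n); [congruence|].
    destruct HN as [_ N1]; destruct Hff as [Hff|[H1 H2]]; [congruence|].
    eapply IHc; eauto. intros w Hw [E|E]; [subst; apply (H1 Hf Hw)| apply (HB w Hw E)].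
Qed.

Theorem mainTheorem10 (xi chi : form) (x : nat) :
  free_for xi x chi ->
  free_in x chi ->
  size xi > 1 ->
  tidy (subst chi xi x) ->
  exists (chi' : form) (x' : nat),
    tidy chi' /\
    free_for xi x' chi' /\
    subst chi' xi x' = subst chi xi x /\
    size chi' <= size chi /\
    (forall e : fp, ad e chi' <= ad e chi) /\
    ~ free_subformula xi chi'.
Proof.
  intros Hff Hfr Hsz Htidy.
  set (x' := S (max (maxvar chi) (maxvar xi))).
  assert (N1 : ~ free_in x' chi) by (intro H; apply free_maxvar in H; unfold x' in H; lia).
  assert (N2 : ~ bound_in x' chi) by (intro H; apply bound_maxvar in H; unfold x' in H; lia).
  assert (N3 : ~ free_in x' xi) by (intro H; apply free_maxvar in H; unfold x' in H; lia).
  assert (N4 : maxvar xi < x') by (unfold x'; lia).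
  set (psi0 := subst chi (FVar x') x).
  assert (N5 : ~ bound_in x' psi0).
  { intro H; apply bound_subst_inv in H; simpl in H; tauto. }
  exists (abs xi x' [] psi0), x'.
  split; [|split; [|split; [|split; [|split]]]].
  - intros w [Hf Hb]. apply A5b in Hb. apply bound_subst_inv in Hb; simpl in Hb.
    destruct Hb as [Hb|[]].
    apply A5a in Hf. destruct Hf as [Hf|Hf]; [|subst; tauto].
    apply free_subst_inv in Hf; simpl in Hf. destruct Hf as [[Hf Hwx]|Hf]; [|subst; tauto].
    apply (Htidy w); split; [apply free_subst_keep; auto| apply bound_subst_keep; auto].
  - apply A4; auto. apply free_for_rename; auto.
  - rewrite A3 by auto. unfold psi0. apply rename_compose; auto.
  - pose proof (A2 xi x' psi0 []). unfold psi0 in H; rewrite size_rename in H. exact H.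
  - intro e. destruct (ad_spec e chi) as [H1 _]. destruct (ad_spec e (abs xi x' [] psi0)) as [_ H2].
    apply H2. apply AH_abs with psi0.
    + apply AH_subst; auto. apply AH_var0. apply free_for_notbound. simpl; intros w Hw; subst; auto.
    + apply A1; auto.
  - intros (c & y & E & Hfy & Hffy).
    destruct (A6 xi x' psi0 [] Hsz N4) as [HN _].
    rewrite E in HN. apply (NoOcc_sub xi y c [] HN Hfy Hffy). intros w _ [].
Qed.
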